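(* Let $b>1$, $p\ge1$, $R\subseteq\{0,\ldots,p-1\}$. Let $k$ be the greatest divisor of $p$ coprime with $b$, $d=p/k$, and $j$ the least integer $j\ge0$ such that $d$ divides $b^j$. If $s,s'$ are states of $\mathcal{A}_{R,p}$ with $s\equiv s'\pmod k$, then $s$ and $s'$ are $j$-ultimately-equivalent.
   Context: $A_b=\{0,\ldots,b-1\}$. $\mathcal{A}_{R,p}$: complete deterministic automaton over $A_b$ with states $\{0,\ldots,p-1\}$, initial $0$, final $R$, transitions $n\xrightarrow{a}(nb+a)\bmod p$. For an integer $m\ge0$, two states $s,s'$ are $m$-ultimately-equivalent if for every word $u$ with $|u|\ge m$, $s\cdot u=s'\cdot u$, where $s\cdot u$ is the state reached from $s$ by reading $u$. *)

(* Defs.v *)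
From mathcomp Require Import all_boot.
Set Implicit Arguments. Unset Strict Implicit. Unset Printing Implicit Defensive.

(* The automaton A_{R,p} over the alphabet A_b = 'I_b = {0,...,b-1}.
   States are {0,...,p-1} = 'I_p (p >= 1), initial state 0, final states R,
   transition n --a--> (n*b + a) mod p. *)
Record automaton (b p : nat) := Automaton {
  init : 'I_p;
  final : {set 'I_p};
  delta : 'I_p -> 'I_b -> 'I_p }.

Definition Astep (b p : nat) (Hp : 0 < p) (n : 'I_p) (a : 'I_b) : 'I_p :=
  Ordinal (ltn_pmod (n * b + a) Hp).

Definition A_Rp (b p : nat) (Hp : 0 < p) (R : {set 'I_p}) : automaton b p :=
  Automaton (Ordinal Hp) R (@Astep b p Hp).

Definition read (b p : nat) (A : automaton b p) (s : 'I_p) (u : seq 'I_b) : 'I_p :=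
  foldl (delta A) s u.

Definition ult_equiv (b p : nat) (A : automaton b p) (m : nat) (s s' : 'I_p) : Prop :=
  forall u : seq 'I_b, m <= size u -> read A s u = read A s' u.

(* Main.v *)
Require Import Defs.
From mathcomp Require Import all_boot.

Lemma read_eq (b p : nat) (Hp : 0 < p) (R : {set 'I_p}) (u : seq 'I_b) :
  forall (m : nat) (s s' : 'I_p), m <= size u ->
  s * b ^ m = s' * b ^ m %[mod p] -> read (@A_Rp b p Hp R) s u = read (@A_Rp b p Hp R) s' u.
Proof.
elim: u => [|a u IH] m s s' /= Hm Hs.
  move: Hm; rewrite leqn0 => /eqP Em; subst m.
  rewrite /read /=; apply: val_inj => /=.
  by move: Hs; rewrite expn0 !muln1 !modn_small.
apply: (IH m.-1) => //=; first by case: m Hm {Hs}.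
rewrite /Astep /=.
rewrite !modnMml !mulnDl.
have h : s * b * b ^ m.-1 = s' * b * b ^ m.-1 %[mod p].
  case: m Hm Hs => [|m] _ Hs /=.
    move: Hs; rewrite expn0 !muln1 => Hs.
    by rewrite -modnMml Hs modnMml.
  by rewrite -!mulnA -expnS.
by rewrite -modnDml h modnDml.
Qed.

Theorem lemma21 (b p : nat) (Hb : 1 < b) (Hp : 0 < p) (R : {set 'I_p})
  (k d j : nat)
  (Hk : [/\ k %| p, coprime k b &
         forall k', k' %| p -> coprime k' b -> k' <= k])
  (Hd : d = p %/ k)
  (Hj : d %| b ^ j /\ forall j', d %| b ^ j' -> j <= j')
  (s s' : 'I_p) :
  s = s' %[mod k] -> ult_equiv (@A_Rp b p Hp R) j s s'.
Proof.
case: Hk => Hkp _ _; case: Hj => Hdj _ Hs u Hu.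
apply: (@read_eq b p Hp R u j s s' Hu).
have Hp' : p = k * d by rewrite Hd mulnC divnK.
have key : forall x y : nat, y <= x -> x = y %[mod k] -> x * b ^ j = y * b ^ j %[mod p].
  move=> x y le xy; apply/eqP; rewrite eqn_mod_dvd; last by rewrite leq_mul2r le orbT.
  rewrite -mulnBl Hp' dvdn_mul //.
  by move/eqP: xy; rewrite eqn_mod_dvd.
case: (leqP s' s) => le; first exact: key.
by symmetry; apply: key => //; apply: ltnW.
Qed.
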